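(* Let $G$ be a group and $P$ a subgroup of $\operatorname{Aut}(G)$. Then the partition hypergroup $\{G\}_P$ is realizable; more precisely, it is isomorphic to $\mathbf{H}(S)$ where $S=\{C_{[a]}:[a]\in\{G\}_P\}$, $C_{[a]}=\{(x,y)\in G\times G:xy^{-1}\in[a]\}$, is the partition association scheme on $G$.
   Context: For $a\in G$, $[a]=\{g(a):g\in P\}$ and $\{G\}_P$ is the set of these orbits. The partition hypergroup $\{G\}_P$ has hyperoperation $[x]*[y]=\{[z]: z=x'y' \text{ for some } x',y'\in G \text{ with } [x']=[x],[y']=[y]\}$. For a nonempty set $X$: $1_X$ is the diagonal, $p^*=\{(a,b):(b,a)\in p\}$, $xp=\{y:(x,y)\in p\}$. An association scheme on $X$ is a partition $S$ of $X\times X$ with $1_X\in S$, closed under $p\mapsto p^*$, such that for all $p,q,r\in S$ there is a cardinal $a_{pq}^r$ with $|yp\cap zq^*|=a_{pq}^r$ for all $y\in X$, $z\in yr$. $\mathbf{H}(S)$ is the hypergroup on $S$ with $p*q=\{r: a_{pq}^r\ge1\}$ (complex multiplication), identity $1_X$, inverse $p^*$. A hypergroup is realizable if it is isomorphic to $\mathbf{H}(S)$ for some association scheme $S$. (A hypergroup is a nonempty set with a hyperoperation into nonempty subsets that is associative, has a unique identity, unique inverses $h^{-1}$ with $e\in(h^{-1}*h)\cap(h*h^{-1})$, and is reversible.) *)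

(* Defs.v *)
(* Groups may be infinite, so the group is given as a carrier
   type with explicit operations and axioms. Subsets are predicates. *)
Set Implicit Arguments.

Section Defs.

Definition is_group (G : Type) (mul : G -> G -> G) (inv : G -> G) (e : G) : Prop :=
  (forall x y z, mul x (mul y z) = mul (mul x y) z) /\
  (forall x, mul e x = x /\ mul x e = x) /\
  (forall x, mul (inv x) x = e /\ mul x (inv x) = e).

Definition bijective_fun (A B : Type) (f : A -> B) : Prop :=
  exists g : B -> A, (forall a, g (f a) = a) /\ (forall b, f (g b) = b).

Definition is_aut (G : Type) (mul : G -> G -> G) (f : G -> G) : Prop :=
  (forall x y, f (mul x y) = mul (f x) (f y)) /\ bijective_fun f.

Definition is_aut_subgroup (G : Type) (mul : G -> G -> G) (P : (G -> G) -> Prop) : Prop :=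
  (forall f, P f -> is_aut mul f) /\
  P (fun x => x) /\
  (forall f g, P f -> P g -> P (fun x => f (g x))) /\
  (forall f, P f -> exists g, P g /\ (forall x, g (f x) = x) /\ (forall x, f (g x) = x)).

Definition orbit (G : Type) (P : (G -> G) -> Prop) (a : G) : G -> Prop :=
  fun x => exists g, P g /\ g a = x.

Definition orbits (G : Type) (P : (G -> G) -> Prop) : Type :=
  { O : G -> Prop | exists a, O = orbit P a }.

Definition partition_hyperop (G : Type) (mul : G -> G -> G) (P : (G -> G) -> Prop)
    (X Y Z : orbits P) : Prop :=
  exists x' y', orbit P x' = proj1_sig X /\ orbit P y' = proj1_sig Y /\
                proj1_sig Z = orbit P (mul x' y').

Definition equinumerous (X : Type) (A B : X -> Prop) : Prop :=
  exists f : {x | A x} -> {x | B x}, bijective_fun f.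

Definition is_association_scheme (X : Type) (S : (X -> X -> Prop) -> Prop) : Prop :=
  (forall p, S p -> exists a b, p a b) /\
  (forall a b, exists p, S p /\ p a b) /\
  (forall p q a b, S p -> S q -> p a b -> q a b -> p = q) /\
  S (fun a b => a = b) /\
  (forall p, S p -> S (fun a b => p b a)) /\
  (* intersection numbers: the cardinal |yp ∩ zq^*| (zq^* = {x : q x z})
     is the same for all (y,z) in r *)
  (forall p q r, S p -> S q -> S r ->
     forall y z y' z', r y z -> r y' z' ->
       equinumerous (fun x => p y x /\ q x z) (fun x => p y' x /\ q x z')).

Definition scheme_elems (X : Type) (S : (X -> X -> Prop) -> Prop) : Type :=
  { p : X -> X -> Prop | S p }.

(* complex multiplication: p*q = { r : a_{pq}^r >= 1 } *)
Definition complex_mul (X : Type) (S : (X -> X -> Prop) -> Prop)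
    (p q r : scheme_elems S) : Prop :=
  exists y z, proj1_sig r y z /\ exists x, proj1_sig p y x /\ proj1_sig q x z.

Definition hyper_isomorphic (T1 T2 : Type)
    (op1 : T1 -> T1 -> T1 -> Prop) (op2 : T2 -> T2 -> T2 -> Prop) : Prop :=
  exists f : T1 -> T2, bijective_fun f /\
    forall x y z, op1 x y z <-> op2 (f x) (f y) (f z).

Definition partition_scheme (G : Type) (mul : G -> G -> G) (inv : G -> G)
    (P : (G -> G) -> Prop) : (G -> G -> Prop) -> Prop :=
  fun R => exists a, R = (fun x y => orbit P a (mul x (inv y))).

End Defs.

(* Main.v *)
Require Import Defs.
From Stdlib Require Import FunctionalExtensionality PropExtensionality ProofIrrelevance.

Lemma sig_eq (A : Type) (Q : A -> Prop) (a b : sig Q) :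
  proj1_sig a = proj1_sig b -> a = b.
Proof.
  destruct a as [x px], b as [y py]; simpl; intros ->.
  f_equal; apply proof_irrelevance.
Qed.

Section Grp.
Context {G : Type} {mul : G -> G -> G} {inv : G -> G} {e : G}
        (Hg : is_group mul inv e).

Lemma g_assoc x y z : mul x (mul y z) = mul (mul x y) z.
Proof. apply Hg. Qed.
Lemma g_el x : mul e x = x. Proof. apply Hg. Qed.
Lemma g_er x : mul x e = x. Proof. apply Hg. Qed.
Lemma g_il x : mul (inv x) x = e. Proof. apply Hg. Qed.
Lemma g_ir x : mul x (inv x) = e. Proof. apply Hg. Qed.

Lemma g_inv_uniq a b : mul a b = e -> a = inv b.
Proof.
  intro H. rewrite <- (g_er a), <- (g_ir b), g_assoc, H, g_el. reflexivity.
Qed.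

Lemma g_inv_inv x : inv (inv x) = x.
Proof. symmetry; apply g_inv_uniq, g_ir. Qed.

Lemma g_inv_mul x y : inv (mul x y) = mul (inv y) (inv x).
Proof.
  symmetry; apply g_inv_uniq.
  rewrite <- g_assoc, (g_assoc (inv x)), g_il, g_el, g_il. reflexivity.
Qed.

Lemma g_inv_e : inv e = e.
Proof. symmetry; apply g_inv_uniq, g_el. Qed.

Lemma g_cancel1 a b : mul (mul a (inv b)) b = a.
Proof. rewrite <- g_assoc, g_il, g_er. reflexivity. Qed.
Lemma g_cancel2 a b : mul (mul a b) (inv b) = a.
Proof. rewrite <- g_assoc, g_ir, g_er. reflexivity. Qed.

Lemma g_inv_div a b : inv (mul a (inv b)) = mul b (inv a).
Proof. rewrite g_inv_mul, g_inv_inv. reflexivity. Qed.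

Lemma aut_e f : is_aut mul f -> f e = e.
Proof.
  intros [Hm _].
  assert (H : f e = mul (f e) (f e)) by (rewrite <- Hm, g_el; reflexivity).
  transitivity (mul (mul (inv (f e)) (f e)) (f e)).
  { rewrite g_il, g_el. reflexivity. }
  rewrite <- g_assoc, <- H, g_il. reflexivity.
Qed.

Lemma aut_inv f x : is_aut mul f -> f (inv x) = inv (f x).
Proof.
  intros Ha. apply g_inv_uniq. destruct Ha as [Hm B].
  rewrite <- Hm, g_il. apply aut_e. split; auto.
Qed.

Context {P : (G -> G) -> Prop} (HP : is_aut_subgroup mul P).

Lemma orbit_self a : orbit P a a.
Proof. exists (fun x => x). split; [apply HP | reflexivity]. Qed.

Lemma orbit_closed a u g : P g -> orbit P a u -> orbit P a (g u).
Proof.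
  intros Pg [k [Pk <-]]. exists (fun x => g (k x)). split; [|reflexivity].
  apply HP; auto.
Qed.

Lemma orbit_eq a w : orbit P a w -> orbit P a = orbit P w.
Proof.
  intros [g [Pg <-]].
  destruct HP as [_ [_ [Hc Hi]]].
  destruct (Hi g Pg) as [h [Ph [Hhg Hgh]]].
  apply functional_extensionality; intro x; apply propositional_extensionality; split.
  - intros [k [Pk <-]]. exists (fun y => k (h y)). split; [apply Hc; auto|].
    simpl. rewrite Hhg. reflexivity.
  - intros [k [Pk <-]]. exists (fun y => k (g y)). split; [apply Hc; auto|reflexivity].
Qed.

Lemma orbit_inv c u : orbit P c u -> orbit P (inv c) (inv u).
Proof.
  intros [g [Pg <-]]. exists g. split; auto. apply aut_inv. apply HP; auto.
Qed.

Lemma transfer a b g y z y' z' x' :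
  P g -> g (mul y' (inv z')) = mul y (inv z) ->
  orbit P a (mul y' (inv x')) -> orbit P b (mul x' (inv z')) ->
  orbit P a (mul y (inv (mul (g (mul x' (inv z'))) z))) /\
  orbit P b (mul (mul (g (mul x' (inv z'))) z) (inv z)).
Proof.
  intros Pg Hw Ha Hb. assert (Ag : is_aut mul g) by (apply HP; auto).
  split.
  - rewrite g_inv_mul, g_assoc, <- Hw, <- aut_inv by auto.
    destruct Ag as [Hm _]. rewrite <- Hm.
    rewrite g_inv_div, <- g_assoc, (g_assoc (inv z')), g_il, g_el.
    apply orbit_closed; auto.
  - rewrite g_cancel2. apply orbit_closed; auto.
Qed.

End Grp.

Theorem corollary5p6 (G : Type) (mul : G -> G -> G) (inv : G -> G) (e : G)
    (P : (G -> G) -> Prop) :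
  is_group mul inv e ->
  is_aut_subgroup mul P ->
  is_association_scheme (partition_scheme mul inv P) /\
  hyper_isomorphic (@partition_hyperop G mul P)
                   (@complex_mul G (partition_scheme mul inv P)).
Proof.
  intros Hg HP. split.
  - split; [|split; [|split; [|split; [|split]]]].
    + intros p [a ->]. exists a, e. simpl. rewrite (g_inv_e Hg), (g_er Hg).
      apply (orbit_self HP).
    + intros a b. exists (fun x y => orbit P (mul a (inv b)) (mul x (inv y))).
      split; [exists (mul a (inv b)); reflexivity | apply (orbit_self HP)].
    + intros p q a b [c1 ->] [c2 ->] H1 H2.
      rewrite (orbit_eq HP _ _ H1), (orbit_eq HP _ _ H2). reflexivity.
    + exists e. apply functional_extensionality; intro x;
      apply functional_extensionality; intro y; apply propositional_extensionality; split.
      * intros ->. rewrite (g_ir Hg). apply (orbit_self HP).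
      * intros [g [Pg Hge]]. rewrite (aut_e Hg) in Hge by (apply HP; auto).
        rewrite <- (g_cancel1 Hg x y), <- Hge, (g_el Hg). reflexivity.
    + intros p [c ->]. exists (inv c).
      apply functional_extensionality; intro x;
      apply functional_extensionality; intro y; apply propositional_extensionality; split.
      * intro H. rewrite <- (g_inv_div Hg). apply (orbit_inv Hg HP); auto.
      * intro H. rewrite <- (g_inv_inv Hg c), <- (g_inv_div Hg). apply (orbit_inv Hg HP); auto.
    + intros p q r [a ->] [b ->] [c ->] y z y' z' Hr Hr'.
      assert (Hw : orbit P (mul y' (inv z')) (mul y (inv z))).
      { rewrite <- (orbit_eq HP _ _ Hr'), (orbit_eq HP _ _ Hr). apply (orbit_self HP). }
      destruct Hw as [g [Pg Hgw]].
      pose proof HP as HP0; destruct HP0 as [HA [_ [_ Hi]]].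
      destruct (Hi g Pg) as [h [Ph [Hhg Hgh]]].
      assert (Hhw : h (mul y (inv z)) = mul y' (inv z')) by (rewrite <- Hgw; auto).
      unshelve eexists.
      * intros [x H]. exists (mul (h (mul x (inv z))) z'). destruct H as [H1 H2].
        exact (transfer Hg HP a b h y' z' y z x Ph Hhw H1 H2).
      * unshelve eexists.
        -- intros [x H]. exists (mul (g (mul x (inv z'))) z). destruct H as [H1 H2].
           exact (transfer Hg HP a b g y z y' z' x Pg Hgw H1 H2).
        -- split.
           ++ intros [x H]. apply sig_eq. simpl.
              rewrite (g_cancel2 Hg), Hgh, (g_cancel1 Hg). reflexivity.
           ++ intros [x H]. apply sig_eq. simpl.
              rewrite (g_cancel2 Hg), Hhg, (g_cancel1 Hg). reflexivity.
  - unshelve eexists.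
    + intros [O HO]. exists (fun x y => O (mul x (inv y))).
      destruct HO as [a ->]. exists a. reflexivity.
    + split.
      * unshelve eexists.
        -- intros [R HR]. exists (fun w => R w e).
           destruct HR as [a ->]. exists a. apply functional_extensionality; intro w.
           rewrite (g_inv_e Hg), (g_er Hg). reflexivity.
        -- split.
           ++ intros [O HO]. apply sig_eq. simpl. apply functional_extensionality; intro w.
              destruct HO as [a ->]. simpl. rewrite (g_inv_e Hg), (g_er Hg). reflexivity.
           ++ intros [R HR]. apply sig_eq. simpl.
              destruct HR as [a ->]. simpl.
              apply functional_extensionality; intro x;
              apply functional_extensionality; intro y.
              rewrite (g_inv_e Hg), (g_er Hg). reflexivity.
      * intros [X HX] [Y HY] [Z HZ]. unfold partition_hyperop, complex_mul. simpl.
        split.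
        -- intros [x' [y' [H1 [H2 H3]]]].
           exists (mul x' y'), e. rewrite (g_inv_e Hg), (g_er Hg). split.
           ++ rewrite H3. apply (orbit_self HP).
           ++ exists y'. rewrite ?(g_er Hg), (g_cancel2 Hg), <- H1, <- H2. split; apply (orbit_self HP).
        -- intros [y [z [Hz [x [Hx Hy]]]]].
           exists (mul y (inv x)), (mul x (inv z)).
           destruct HX as [a ->], HY as [b ->], HZ as [c ->].
           split; [symmetry; apply (orbit_eq HP _ _); auto|].
           split; [symmetry; apply (orbit_eq HP _ _); auto|].
           rewrite <- (g_assoc Hg), (g_assoc Hg (inv x)), (g_il Hg), (g_el Hg).
           apply (orbit_eq HP _ _); auto.
Qed.
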